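(* Every cartesian category $(\mathcal C,\times,1)$, viewed as a discard category with $\top_A:A\to 1$ the unique morphism to the terminal object, is pseudo-purifiable. Moreover, for every $f\in\mathcal C(A,B)$ the pairing $\langle f,\mathrm{id}_A\rangle\in\mathcal C(A,B\times A)$ is a pseudo-purification of $f$.
   Context: A discard category is a symmetric monoidal category with, for each object $A$, a morphism $\top_A:A\to I$ with $\top_I=\mathrm{id}_I$ and $\top_{A\otimes B}=\top_A\otimes\top_B$; $f:A\to B$ is causal if $\top_B\circ f=\top_A$. A morphism $p\in\mathcal C(A,B\otimes X)$ is a pseudo-purification of $f\in\mathcal C(A,B)$, written $p\in\mathrm{Pure}(f)$, if for every object $Y$ and every $g\in\mathcal C(A,B\otimes Y)$ with $f=(\mathrm{id}_B\otimes\top_Y)\circ g$ there is a causal $c\in\mathcal C(X,Y)$ with $g=(\mathrm{id}_B\otimes c)\circ p$. The category is pseudo-purifiable if every morphism has a pseudo-purification and, for all $f_1\in\mathcal C(A_1,B_1\otimes C)$, $f_2\in\mathcal C(C\otimes A_2,B_2)$, $p_1\in\mathrm{Pure}(f_1)$ with $p_1:A_1\to B_1\otimes C\otimes X_1$ and $p_2\in\mathrm{Pure}(f_2)$ with $p_2:C\otimes A_2\to B_2\otimes X_2$, the morphism $(\mathrm{id}_{B_1\otimes B_2}\otimes\sigma_{X_2,X_1})\circ(\mathrm{id}_{B_1}\otimes p_2\otimes\mathrm{id}_{X_1})\circ(\mathrm{id}_{B_1\otimes C}\otimes\sigma_{X_1,A_2})\circ(p_1\otimes\mathrm{id}_{A_2})$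 is a pseudo-purification of $(\mathrm{id}_{B_1}\otimes f_2)\circ(f_1\otimes\mathrm{id}_{A_2})$ (here $\sigma$ is the symmetry). *)

(* Defs.v *)
Record CartCat : Type := {
  ob :> Type;
  hom : ob -> ob -> Type;
  idm : forall A : ob, hom A A;
  comp : forall A B C : ob, hom B C -> hom A B -> hom A C;
  comp_id_l : forall A B (f : hom A B), comp A B B (idm B) f = f;
  comp_id_r : forall A B (f : hom A B), comp A A B f (idm A) = f;
  comp_assoc : forall A B C D (f : hom A B) (g : hom B C) (h : hom C D),
      comp A C D h (comp A B C g f) = comp A B D (comp B C D h g) f;
  one : ob;
  bang : forall A : ob, hom A one;
  bang_unique : forall A (f : hom A one), f = bang A;
  prod : ob -> ob -> ob;
  p1 : forall A B : ob, hom (prod A B) A;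
  p2 : forall A B : ob, hom (prod A B) B;
  pair : forall D A B : ob, hom D A -> hom D B -> hom D (prod A B);
  pair_p1 : forall D A B (f : hom D A) (g : hom D B),
      comp D (prod A B) A (p1 A B) (pair D A B f g) = f;
  pair_p2 : forall D A B (f : hom D A) (g : hom D B),
      comp D (prod A B) B (p2 A B) (pair D A B f g) = g;
  pair_unique : forall D A B (f : hom D A) (g : hom D B) (h : hom D (prod A B)),
      comp D (prod A B) A (p1 A B) h = f ->
      comp D (prod A B) B (p2 A B) h = g -> h = pair D A B f g
}.

Arguments hom {c} _ _.
Arguments idm {c} _.
Arguments comp {c A B C} _ _.
Arguments one {c}.
Arguments bang {c} _.
Arguments prod {c} _ _.
Arguments p1 {c A B}.
Arguments p2 {c A B}.
Arguments pair {c D A B} _ _.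

Notation "g ⊚ f" := (comp g f) (at level 40, left associativity).
Notation "A ⊗ B" := (prod A B) (at level 34, left associativity).

Section CartesianMonoidal.
Context {C : CartCat}.

Definition tens {A B A' B' : C} (f : hom A A') (g : hom B B') :
  hom (A ⊗ B) (A' ⊗ B') := pair (f ⊚ p1) (g ⊚ p2).

Definition assoc (A B D : C) : hom ((A ⊗ B) ⊗ D) (A ⊗ (B ⊗ D)) :=
  pair (p1 ⊚ p1) (pair (p2 ⊚ p1) p2).
Definition assoc_inv (A B D : C) : hom (A ⊗ (B ⊗ D)) ((A ⊗ B) ⊗ D) :=
  pair (pair p1 (p1 ⊚ p2)) (p2 ⊚ p2).

Definition sym (A B : C) : hom (A ⊗ B) (B ⊗ A) := pair p2 p1.

Definition runit (B : C) : hom (B ⊗ one) B := p1.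
Definition lunit (B : C) : hom (one ⊗ B) B := p2.

Definition top (A : C) : hom A one := bang A.

Definition causal {A B : C} (f : hom A B) : Prop := top B ⊚ f = top A.

(** The discard-category axioms (top_I = id_I, top_{A⊗B} = top_A ⊗ top_B,
    up to the unitor I ⊗ I ≅ I). *)
Definition discard_axioms : Prop :=
  top (@one C) = idm one /\
  forall A B : C, top (A ⊗ B) = lunit one ⊚ tens (top A) (top B).

Definition Pure {A B X : C} (f : hom A B) (p : hom A (B ⊗ X)) : Prop :=
  forall (Y : C) (g : hom A (B ⊗ Y)),
    f = runit B ⊚ (tens (idm B) (top Y) ⊚ g) ->
    exists c : hom X Y, causal c /\ g = tens (idm B) c ⊚ p.

(** Sequential-parallel composite (id_B1 ⊗ f2) ∘ (f1 ⊗ id_A2), with the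
    associator inserted:  A1⊗A2 -> ((B1⊗C)⊗A2) -> B1⊗(C⊗A2) -> B1⊗B2. *)
Definition seqcomp {A1 B1 Cc A2 B2 : C}
  (f1 : hom A1 (B1 ⊗ Cc)) (f2 : hom (Cc ⊗ A2) B2) : hom (A1 ⊗ A2) (B1 ⊗ B2) :=
  tens (idm B1) f2 ⊚ assoc B1 Cc A2 ⊚ tens f1 (idm A2).

(** The composite of pseudo-purifications, with B1⊗C⊗X1 read as (B1⊗C)⊗X1
    and associators inserted where the paper's (strict) notation omits them:
    A1⊗A2 --p1⊗id--> ((B1⊗C)⊗X1)⊗A2 --α--> (B1⊗C)⊗(X1⊗A2)
          --id⊗σ--> (B1⊗C)⊗(A2⊗X1) --α--> B1⊗(C⊗(A2⊗X1))
          --id⊗α⁻¹--> B1⊗((C⊗A2)⊗X1) --id⊗(p2⊗id)--> B1⊗((B2⊗X2)⊗X1)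
          --id⊗α--> B1⊗(B2⊗(X2⊗X1)) --α⁻¹--> (B1⊗B2)⊗(X2⊗X1)
          --id⊗σ--> (B1⊗B2)⊗(X1⊗X2). *)
Definition seqpure {A1 B1 Cc X1 A2 B2 X2 : C}
  (q1 : hom A1 ((B1 ⊗ Cc) ⊗ X1)) (q2 : hom (Cc ⊗ A2) (B2 ⊗ X2)) :
  hom (A1 ⊗ A2) ((B1 ⊗ B2) ⊗ (X1 ⊗ X2)) :=
  tens (idm (B1 ⊗ B2)) (sym X2 X1)
  ⊚ assoc_inv B1 B2 (X2 ⊗ X1)
  ⊚ tens (idm B1) (assoc B2 X2 X1)
  ⊚ tens (idm B1) (tens q2 (idm X1))
  ⊚ tens (idm B1) (assoc_inv Cc A2 X1)
  ⊚ assoc B1 Cc (A2 ⊗ X1)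
  ⊚ tens (idm (B1 ⊗ Cc)) (sym X1 A2)
  ⊚ assoc (B1 ⊗ Cc) X1 A2
  ⊚ tens q1 (idm A2).

Definition pseudo_purifiable : Prop :=
  (forall (A B : C) (f : hom A B), exists (X : C) (p : hom A (B ⊗ X)), Pure f p)
  /\
  (forall (A1 B1 Cc X1 A2 B2 X2 : C)
          (f1 : hom A1 (B1 ⊗ Cc)) (f2 : hom (Cc ⊗ A2) B2)
          (q1 : hom A1 ((B1 ⊗ Cc) ⊗ X1)) (q2 : hom (Cc ⊗ A2) (B2 ⊗ X2)),
      Pure f1 q1 -> Pure f2 q2 -> Pure (seqcomp f1 f2) (seqpure q1 q2)).

End CartesianMonoidal.

(* Main.v *)
Require Import Defs.
From Corelib Require Import ssreflect.


Lemma pair_comp {C : CartCat} (D E A B : C) (f : hom D A) (g : hom D B) (h : hom E D) :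
  pair f g ⊚ h = pair (f ⊚ h) (g ⊚ h).
Proof.
  apply: pair_unique.
  - by rewrite comp_assoc pair_p1.
  - by rewrite comp_assoc pair_p2.
Qed.

Lemma pair_eta {C : CartCat} (D A B : C) (h : hom D (A ⊗ B)) : pair (p1 ⊚ h) (p2 ⊚ h) = h.
Proof. symmetry; by apply: pair_unique. Qed.

Lemma pair_id {C : CartCat} (A B : C) : pair (@p1 C A B) p2 = idm (A ⊗ B).
Proof. symmetry; apply: pair_unique; by rewrite comp_id_r. Qed.

Hint Rewrite comp_id_l comp_id_r @pair_comp pair_p1 pair_p2 : cat.
Hint Rewrite <- comp_assoc : cat.
From Stdlib Require Import Setoid.
Ltac norm := repeat (rewrite_strat (bottomup (hints cat))).
Ltac norm0 := repeat progress (rewrite ?comp_id_l ?comp_id_r -?comp_assoc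
   ?pair_comp ?pair_p1 ?pair_p2).

Ltac unf := unfold Pure, seqpure, seqcomp, tens, assoc, assoc_inv, sym,
   runit, lunit in *.

Lemma pure_iff {C : CartCat} (A B X : C) (f : hom A B) (q : hom A (B ⊗ X)) :
  Pure f q <-> (p1 ⊚ q = f /\ exists r : hom X A, r ⊚ (p2 ⊚ q) = idm A).
Proof.
  split.
  - move=> H.
    have [c [_ E]] : exists c : hom X A, causal c /\ pair f (idm A) = tens (idm B) c ⊚ q.
      apply: H. unf. norm. reflexivity.
    unf. norm.
    have E1 := f_equal (fun h => p1 ⊚ h) E.
    have E2 := f_equal (fun h => p2 ⊚ h) E.
    simpl in E1, E2.
    repeat progress (rewrite ?comp_id_l ?comp_id_r -?comp_assoc ?pair_comp ?pair_p1 ?pair_p2 in E1).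
    repeat progress (rewrite ?comp_id_l ?comp_id_r -?comp_assoc ?pair_comp ?pair_p1 ?pair_p2 in E2).
    split; first by rewrite E1.
    exists c. by rewrite E2.
  - move=> [e [r hr]] Y g Hg.
    exists (p2 ⊚ (g ⊚ r)). split.
    + unfold causal, top. exact: bang_unique.
    + unf. norm. rewrite hr comp_id_r e Hg. norm. by rewrite pair_eta.
Qed.



Theorem lemma7 (C : CartCat) :
  @discard_axioms C /\
  @pseudo_purifiable C /\
  (forall (A B : C) (f : hom A B), Pure f (pair f (idm A))).
Proof.
  have third : forall (A B : C) (f : hom A B), Pure f (pair f (idm A)).
    move=> A B f. apply/pure_iff. rewrite pair_p1. split => //.
    exists (idm A). by rewrite pair_p2 comp_id_l.
  split; last split; last exact: third.
  - split.
    + unfold top. by rewrite [idm _]bang_unique.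
    + move=> A B. unfold top. by rewrite [_ ⊚ _]bang_unique.
  - split.
    + move=> A B f. exists A, (pair f (idm A)). exact: third.
    + move=> A1 B1 Cc X1 A2 B2 X2 f1 f2 q1 q2 /pure_iff [e1 [r1 h1]] /pure_iff [e2 [r2 h2]].
      subst f1 f2.
      apply/pure_iff. split.
      * unfold seqpure, seqcomp, tens, assoc, assoc_inv, sym.
        norm. reflexivity.
      * exists (pair (r1 ⊚ p1) (p2 ⊚ (r2 ⊚ p2))).
        have h1' : forall D (h : hom D A1), r1 ⊚ (p2 ⊚ (q1 ⊚ h)) = h.
          move=> D h. have := f_equal (fun k => k ⊚ h) h1. by rewrite /= comp_id_l -!comp_assoc.
        have h2' : forall D (h : hom D (Cc ⊗ A2)), r2 ⊚ (p2 ⊚ (q2 ⊚ h)) = h.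
          move=> D h. have := f_equal (fun k => k ⊚ h) h2. by rewrite /= comp_id_l -!comp_assoc.
        unfold seqpure, seqcomp, tens, assoc, assoc_inv, sym.
        norm.
        rewrite h1' h2'.
        norm.
        exact: pair_id.
Qed.
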